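(* Let $C'\subseteq C\subseteq\mathbb{R}^n$ be nonempty polyhedra. Then for every lazy expression $E$, $\mathrm{LB}(E,C')\ge\mathrm{LB}(E,C)$ and $\mathrm{UB}(E,C')\le\mathrm{UB}(E,C)$.
   Context: Lazy (scalar) expressions are generated by $E::=\mathtt{Affine}(w,b)\mid\mathtt{Sum}(\{E_1,\dots,E_k\})\mid\mathtt{Max}(\{E_1,\dots,E_k\})\mid\mathtt{Scale}(c,E)\mid\mathtt{Bias}(b,E)$ ($w\in\mathbb{R}^n$, $b,c\in\mathbb{R}$). A polyhedron is a finite intersection of closed halfspaces. The bounds (values in $\mathbb{R}\cup\{\pm\infty\}$, with $0\cdot(\pm\infty)=0$) are defined recursively: $\mathrm{LB}(\mathtt{Affine}(w,b),C)=\inf_{x\in C}(w^\top x+b)$, $\mathrm{UB}(\mathtt{Affine}(w,b),C)=\sup_{x\in C}(w^\top x+b)$; $\mathrm{LB}/\mathrm{UB}$ of $\mathtt{Sum}$ are the sums of the children's $\mathrm{LB}$/$\mathrm{UB}$; $\mathrm{LB}(\mathtt{Scale}(c,E),C)=c\,\mathrm{LB}(E,C)$ if $c\ge0$ and $c\,\mathrm{UB}(E,C)$ if $c<0$, $\mathrm{UB}(\mathtt{Scale}(c,E),C)=c\,\mathrm{UB}(E,C)$ if $c\ge0$ and $c\,\mathrm{LB}(E,C)$ if $c<0$; $\mathrm{LB}/\mathrm{UB}(\mathtt{Bias}(b,E),C)=\mathrm{LB}/\mathrm{UB}(E,C)+b$; $\mathrm{LB}(\mathtt{Max}(\{E_i\}),C)=\max_i\mathrm{LB}(E_i,C)$,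 $\mathrm{UB}(\mathtt{Max}(\{E_i\}),C)=\max_i\mathrm{UB}(E_i,C)$. *)

(* Defs.v *)
From HB Require Import structures.
From mathcomp Require Import all_boot all_order all_algebra.
From mathcomp Require Import all_classical all_reals.
From mathcomp Require Import ereal.

Set Implicit Arguments.
Unset Strict Implicit.
Unset Printing Implicit Defensive.

Import Order.TTheory GRing.Theory Num.Theory.
Local Open Scope classical_set_scope.
Local Open Scope ring_scope.

Definition dotv (R : realType) (n : nat) (w x : 'rV[R]_n) : R :=
  \sum_(i < n) w 0 i * x 0 i.

Definition polyhedron (R : realType) (n : nat) (C : set 'rV[R]_n) : Prop :=
  exists hs : seq ('rV[R]_n * R),
    C = [set x | forall h, h \in hs -> dotv h.1 x <= h.2].

(* Lazy (scalar) expressions.  Sum and Max take finite families of children;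
   Max takes a nonempty family (first child plus a list of further children). *)
Inductive lexpr (R : realType) (n : nat) : Type :=
| Affine of 'rV[R]_n & R
| Sum of seq (lexpr R n)
| Max of lexpr R n & seq (lexpr R n)
| Scale of R & lexpr R n
| Bias of R & lexpr R n.

Local Open Scope ereal_scope.

(* bounds E C = (LB(E,C), UB(E,C)) in \bar R, defined recursively as in the paper.
   In \bar R, 0 * (+-oo) = 0, matching the paper's convention. *)
Fixpoint bounds (R : realType) (n : nat) (C : set 'rV[R]_n) (e : lexpr R n)
  : \bar R * \bar R :=
  match e with
  | Affine w b =>
      (ereal_inf [set ((dotv w x + b)%R)%:E | x in C],
       ereal_sup [set ((dotv w x + b)%R)%:E | x in C])
  | Sum es =>
      (\sum_(p <- map (bounds C) es) p.1, \sum_(p <- map (bounds C) es) p.2)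
  | Max e0 es =>
      (\big[maxe/-oo]_(p <- map (bounds C) (e0 :: es)) p.1,
       \big[maxe/-oo]_(p <- map (bounds C) (e0 :: es)) p.2)
  | Scale c e1 =>
      let p := bounds C e1 in
      if (0 <= c)%R then (c%:E * p.1, c%:E * p.2) else (c%:E * p.2, c%:E * p.1)
  | Bias b e1 =>
      let p := bounds C e1 in (p.1 + b%:E, p.2 + b%:E)
  end.

Definition LB (R : realType) (n : nat) (e : lexpr R n) (C : set 'rV[R]_n) : \bar R :=
  (bounds C e).1.
Definition UB (R : realType) (n : nat) (e : lexpr R n) (C : set 'rV[R]_n) : \bar R :=
  (bounds C e).2.

(* Main.v *)
Require Import Defs.
From HB Require Import structures.
From mathcomp Require Import all_boot all_order all_algebra.
From mathcomp Require Import all_classical all_reals.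
From mathcomp Require Import ereal.
From Stdlib Require List.
Import Order.TTheory GRing.Theory Num.Theory.
Local Open Scope classical_set_scope.
Local Open Scope ereal_scope.

Lemma scale_anti (R : realType) (c : R) (x y : \bar R) :
  (c < 0)%R -> x <= y -> c%:E * y <= c%:E * x.
Proof.
move=> c0 xy.
rewrite -(opprK c) EFinN !mulNe leeN2.
by apply: lee_wpmul2l => //; rewrite lee_fin oppr_ge0 ltW.
Qed.

Section Mono.
Variables (R : realType) (n : nat) (C' C : set 'rV[R]_n).
Hypothesis sub : C' `<=` C.

Definition Pm (e : lexpr R n) :=
  (bounds C e).1 <= (bounds C' e).1 /\ (bounds C' e).2 <= (bounds C e).2.

Lemma sum_mono (es : seq (lexpr R n)) : List.Forall Pm es ->
  (\sum_(p <- map (bounds C) es) p.1 <= \sum_(p <- map (bounds C') es) p.1) /\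
  (\sum_(p <- map (bounds C') es) p.2 <= \sum_(p <- map (bounds C) es) p.2).
Proof.
elim: es => [|e es IH] H; first by rewrite !big_nil.
inversion H as [|? ? [H1 H2] H3]; subst.
have [A B] := IH H3.
rewrite /= !big_cons; split; exact: leeD.
Qed.

Lemma max_mono (es : seq (lexpr R n)) : List.Forall Pm es ->
  (\big[maxe/-oo]_(p <- map (bounds C) es) p.1 <= \big[maxe/-oo]_(p <- map (bounds C') es) p.1) /\
  (\big[maxe/-oo]_(p <- map (bounds C') es) p.2 <= \big[maxe/-oo]_(p <- map (bounds C) es) p.2).
Proof.
elim: es => [|e es IH] H; first by rewrite !big_nil.
inversion H as [|? ? [H1 H2] H3]; subst.
have [A B] := IH H3.
rewrite /= !big_cons; split; exact: le_max2.
Qed.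

Lemma affP w b : Pm (Affine w b).
Proof.
rewrite /Pm /=; split.
  by apply: ereal_inf_le_tmp => _ [x /sub Cx <-]; exists x.
by apply: ereal_sup_le => _ [x /sub Cx <-]; exists x.
Qed.

Lemma sumP es : List.Forall Pm es -> Pm (Sum es).
Proof. exact: sum_mono. Qed.

Lemma maxP e0 es : List.Forall Pm (e0 :: es) -> Pm (Max e0 es).
Proof. exact: max_mono. Qed.

Lemma scaleP c e1 : Pm e1 -> Pm (Scale c e1).
Proof.
rewrite /Pm /= => -[H1 H2].
case: ifP => c0 /=.
  by split; apply: lee_wpmul2l => //; rewrite lee_fin.
have c0' : (c < 0)%R by rewrite ltNge c0.
by split; apply: scale_anti.
Qed.

Lemma biasP b e1 : Pm e1 -> Pm (Bias b e1).
Proof. by rewrite /Pm /= => -[H1 H2]; split; apply: leeD2r. Qed.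

Fixpoint allP (e : lexpr R n) : Pm e :=
  match e return Pm e with
  | Affine w b => affP w b
  | Sum es => @sumP es ((fix F l := match l return List.Forall Pm l with
        | nil => List.Forall_nil _
        | cons x l' => List.Forall_cons x (allP x) (F l') end) es)
  | Max e0 es => @maxP e0 es (List.Forall_cons e0 (allP e0)
       ((fix F l := match l return List.Forall Pm l with
        | nil => List.Forall_nil _
        | cons x l' => List.Forall_cons x (allP x) (F l') end) es))
  | Scale c e1 => @scaleP c e1 (allP e1)
  | Bias b e1 => @biasP b e1 (allP e1)
  end.
End Mono.

Theorem mainTheorem7 (R : realType) (n : nat) (C' C : set 'rV[R]_n) :
  polyhedron C' -> polyhedron C -> C' !=set0 -> C !=set0 -> C' `<=` C ->
  forall E : lexpr R n, LB E C <= LB E C' /\ UB E C' <= UB E C.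
Proof.
move=> _ _ _ _ sub E; rewrite /LB /UB; exact: (@allP R n C' C sub E).
Qed.
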